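(* Let $\Sigma=b^2M_nQ\Psi Q^\top M_n\in\mathbb R^{n\times n}$ be the steady-state covariance of the observables (notation in the context). Let $\psi_1=0$ be the eigenvalue of $\Sigma$ with eigenvector $\mathbf 1_n$, and let $\psi_2\le\dots\le\psi_n$ denote the remaining eigenvalues of $\Sigma$ (with multiplicity). Set $\tilde\psi_2=\psi_2(1-\frac1n)$ and $\tilde\psi_n=\psi_n(1-\frac1n)$. Then every diagonal entry $\sigma_i^2=\Sigma_{ii}$ satisfies $\tilde\psi_2\le\sigma_i^2\le\tilde\psi_n$ for all $i=1,\dots,n$.
   Context: $L$ is the Laplacian of a connected undirected simple graph with positive edge weights, $L=Q\Lambda Q^\top$, $Q=[q_1|\dots|q_n]$ orthogonal, $q_1=\mathbf 1_n/\sqrt n$, $\Lambda=\mathrm{diag}(0,\lambda_2,\dots,\lambda_n)$ with $0<\lambda_2\le\dots\le\lambda_n$; the delay satisfies $0\le\tau<\pi/(2\lambda_n)$; $b\neq0$; $M_n=I_n-\frac1n\mathbf 1_n\mathbf 1_n^\top$; $\Psi=\mathrm{diag}(0,\psi(\lambda_2),\dots,\psi(\lambda_n))$ with $\psi(\lambda)=\frac{\cos(\lambda\tau)}{2\lambda(1-\sin(\lambda\tau))}$. *)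

(* Defs.v *)
From HB Require Import structures.
From mathcomp Require Import all_boot all_order all_algebra.
From mathcomp Require Import reals trigo.
Set Implicit Arguments. Unset Strict Implicit. Unset Printing Implicit Defensive.
Import Order.TTheory GRing.Theory Num.Theory.
Local Open Scope ring_scope.

(* Convention: the paper's number of agents is N = n.+2 (so N >= 2);
   indices are 'I_n.+2, paper index k corresponds to ordinal k-1. *)

Definition laplacian (R : ringType) (N : nat) (W : 'M[R]_N) : 'M[R]_N :=
  \matrix_(i, j) ((if i == j then \sum_k W i k else 0) - W i j).

Definition conn_simple_weighted (R : realDomainType) (N : nat) (W : 'M[R]_N) : Prop :=
  [/\ W^T = W,
      forall i j, 0 <= W i j,
      forall i, W i i = 0
    & forall i j, connect (fun a b => 0 < W a b) i j].

Definition centering (R : fieldType) (N : nat) : 'M[R]_N :=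
  1%:M - (N%:R)^-1 *: const_mx 1.

Definition psi (R : realType) (tau lam : R) : R :=
  cos (lam * tau) / (2 * lam * (1 - sin (lam * tau))).

Definition Psi_mx (R : realType) (n : nat) (tau : R) (lam : 'I_n.+2 -> R) : 'M[R]_n.+2 :=
  diag_mx (\row_i (if i == ord0 then 0 else psi tau (lam i))).

Definition Sigma_mx (R : realType) (n : nat) (b tau : R) (Q : 'M[R]_n.+2)
  (lam : 'I_n.+2 -> R) : 'M[R]_n.+2 :=
  b ^+ 2 *: (centering R n.+2 *m Q *m Psi_mx tau lam *m Q^T *m centering R n.+2).

(* Main.v *)
Require Import Defs.
From HB Require Import structures.
From mathcomp Require Import all_boot all_order all_algebra.
From mathcomp Require Import reals trigo.
From mathcomp Require Import ring.
Import Order.TTheory GRing.Theory Num.Theory.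
Local Open Scope ring_scope.

Lemma colsum0 (R : realType) (n : nat) (Q : 'M[R]_n.+2) (c : R) :
  Q^T *m Q = 1%:M -> c != 0 -> (forall i, Q i ord0 = c) ->
  forall j, j != ord0 -> \sum_k Q k j = 0.
Proof.
move=> QQ c0 Qc j j0.
have := congr1 (fun M : 'M[R]_n.+2 => M ord0 j) QQ.
rewrite !mxE eq_sym (negbTE j0) /=.
under eq_bigr => k _ do rewrite mxE Qc.
by rewrite -mulr_sumr => /eqP; rewrite mulf_eq0 (negbTE c0) /= => /eqP.
Qed.

Lemma centerQD (R : realType) (n : nat) (Q : 'M[R]_n.+2) (c : R) (D : 'rV[R]_n.+2) :
  Q^T *m Q = 1%:M -> c != 0 -> (forall i, Q i ord0 = c) -> D ord0 ord0 = 0 ->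
  centering R n.+2 *m Q *m diag_mx D = Q *m diag_mx D.
Proof.
move=> QQ c0 Qc D0.
apply/matrixP => i j; rewrite !mul_mx_diag !mxE.
have [->|j0] := eqVneq j ord0; first by rewrite D0 !mulr0.
congr (_ * _).
under eq_bigr => k _ do rewrite /centering !mxE mulr1 mulrBl.
rewrite sumrB -mulr_sumr (@colsum0 _ _ Q c QQ c0 Qc j j0) mulr0 subr0.
rewrite (bigD1 i) //= eqxx mul1r big1 ?addr0 // => k /negPf.
by rewrite eq_sym => ->; rewrite mul0r.
Qed.

Lemma centeringT (R : realType) N : (centering R N)^T = centering R N.
Proof. by rewrite /centering linearB /= linearZ /= tr_scalar_mx trmx_const. Qed.

Lemma SigmaE (R : realType) (n : nat) (b tau : R) (Q : 'M[R]_n.+2) (lam : 'I_n.+2 -> R) c :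
  Q^T *m Q = 1%:M -> c != 0 -> (forall i, Q i ord0 = c) ->
  Sigma_mx b tau Q lam = b ^+ 2 *: (Q *m Psi_mx tau lam *m Q^T).
Proof.
move=> QQ c0 Qc.
have H := @centerQD R n Q c (\row_i (if i == ord0 then 0 else psi tau (lam i))) QQ c0 Qc.
rewrite mxE eqxx in H; have {}H := H erefl.
rewrite /Sigma_mx /Psi_mx H -!mulmxA; congr (_ *: (_ *m _)).
have := congr1 trmx H; rewrite !trmx_mul centeringT tr_diag_mx.
by [].
Qed.

Lemma psi_pos (R : realType) (tau l lmax : R) :
  0 < l -> l <= lmax -> 0 <= tau -> tau < pi / (2 * lmax) -> 0 < psi tau l.
Proof.
move=> l0 llm t0 tlt.
have lm0 : 0 < lmax by apply: lt_le_trans llm.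
have h1 : l * tau < pi / 2.
  apply: (le_lt_trans (y := lmax * tau)); first by rewrite ler_wpM2r.
  move: tlt; rewrite ltr_pdivlMr ?mulr_gt0 // => tlt.
  by rewrite ltr_pdivlMr // -mulrA mulrC -mulrA.
have h0 : 0 <= l * tau by rewrite mulr_ge0 // ltW.
have c0 : 0 < cos (l * tau).
  apply: cos_gt0_pihalf; rewrite h1 andbT (lt_le_trans _ h0) //.
  by rewrite oppr_lt0 divr_gt0 // pi_gt0.
have s1 : sin (l * tau) < 1.
  have := cos2Dsin2 (l * tau) => e.
  have : sin (l * tau) ^+ 2 < 1.
    by rewrite -e ltrDr exprn_gt0.
  move=> h; apply: contraLR h; rewrite -!leNgt => h.
  by rewrite -(expr1n _ 2) lerXn2r // ?nnegrE ?(le_trans _ h).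
rewrite /psi divr_gt0 // !mulr_gt0 //; by rewrite subr_gt0.
Qed.

Theorem lemma9 (R : realType) (n : nat) (W : 'M[R]_n.+2) (Q : 'M[R]_n.+2)
  (lam : 'I_n.+2 -> R) (tau b : R) (s : 'I_n.+1 -> R) :
  conn_simple_weighted W ->
  Q *m Q^T = 1%:M ->
  (forall i, Q i ord0 = (Num.sqrt (n.+2)%:R)^-1) ->
  lam ord0 = 0 ->
  (forall i : 'I_n.+2, i != ord0 -> 0 < lam i) ->
  (forall i j : 'I_n.+2, (i <= j)%N -> lam i <= lam j) ->
  laplacian W = Q *m diag_mx (\row_i lam i) *m Q^T ->
  0 <= tau -> tau < pi / (2 * lam ord_max) ->
  b != 0 ->
  (forall i j : 'I_n.+1, (i <= j)%N -> s i <= s j) ->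
  char_poly (Sigma_mx b tau Q lam) = 'X * \prod_i ('X - (s i)%:P) ->
  forall i : 'I_n.+2,
    s ord0 * (1 - ((n.+2)%:R)^-1) <= Sigma_mx b tau Q lam i i /\
    Sigma_mx b tau Q lam i i <= s ord_max * (1 - ((n.+2)%:R)^-1).
Proof.
move=> _ QQt Qc lam0 lampos lammono _ t0 tlt b0 smono chp i.
have QtQ := mulmx1C QQt.
pose c : R := (Num.sqrt (n.+2)%:R)^-1.
have {}Qc : forall i, Q i ord0 = c by exact: Qc.
have sq0 : 0 < Num.sqrt (n.+2)%:R :> R by rewrite sqrtr_gt0 ltr0Sn.
have c0 : c != 0 by rewrite invr_eq0 gt_eqF.
set D := \row_k (if k == ord0 then 0 else psi tau (lam k)).
have key : forall k, k != ord0 -> s ord0 <= b ^+ 2 * psi tau (lam k) <= s ord_max.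
  move=> k k0.
  have pk : 0 < psi tau (lam k).
    apply: (@psi_pos _ _ _ (lam ord_max)) => //; first exact: lampos.
    by apply: lammono; rewrite -ltnS ltn_ord.
  set a := b ^+ 2 * psi tau (lam k).
  have a0 : a != 0.
    by rewrite /a mulf_neq0 ?expf_neq0 // gt_eqF.
  have ev : eigenvalue (Sigma_mx b tau Q lam) a.
    apply/eigenvalueP; exists (row k Q^T).
      rewrite (@SigmaE R n b tau Q lam c QtQ c0 Qc) -row_mul scalemxAr !mulmxA QtQ mul1mx.
      apply/rowP => j; rewrite /Psi_mx mul_diag_mx !mxE.
      by rewrite (negbTE k0) /a mulrCA mulrA.
    apply/eqP => /(congr1 (fun v : 'rV[R]_n.+2 => v *m Q)).
    rewrite -row_mul QtQ mul0mx => /rowP/(_ k); rewrite !mxE eqxx /=.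
    by move/eqP; rewrite oner_eq0.
  move: ev; rewrite eigenvalue_root_char chp /root hornerM hornerX horner_prod.
  rewrite mulf_eq0 (negbTE a0) /= prodf_seq_eq0 => /hasP [j _ /=].
  rewrite !hornerE subr_eq0 => /eqP ->.
  by rewrite !smono // -ltnS ltn_ord.
have ent : Sigma_mx b tau Q lam i i =
    \sum_(k | k != ord0) Q i k ^+ 2 * (b ^+ 2 * psi tau (lam k)).
  rewrite (@SigmaE R n b tau Q lam c QtQ c0 Qc) /Psi_mx mul_mx_diag !mxE.
  rewrite mulr_sumr (bigD1 ord0) //= !mxE eqxx mulr0 mul0r mulr0 add0r.
  apply: eq_bigr => k k0; rewrite !mxE (negbTE k0); ring.
have hq : \sum_(k | k != ord0) Q i k ^+ 2 = 1 - ((n.+2)%:R)^-1.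
  have := congr1 (fun M : 'M[R]_n.+2 => M i i) QQt.
  rewrite !mxE eqxx /= (bigD1 ord0) //= => e.
  move: e; rewrite !mxE Qc mulr1n => e.
  have cc : c * c = ((n.+2)%:R)^-1 by rewrite /c -invfM -expr2 sqr_sqrtr ?ler0n.
  rewrite -cc -e addrC addrK.
  by under [RHS]eq_bigr do rewrite mxE -expr2.
rewrite ent -hq !mulr_sumr; split; apply: ler_sum => k k0.
  by rewrite mulrC ler_wpM2l ?sqr_ge0 //; case/andP: (key k k0).
by rewrite (mulrC (s _)) ler_wpM2l ?sqr_ge0 //; case/andP: (key k k0).
Qed.
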